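(* Let $M:D\to E$ be the continuous map with $D=\{x,y,z,c\}$ having open sets $\emptyset,\{x,y,z\},D$, $E=\{u,v\}$ antidiscrete, $M(x)=M(y)=u$, $M(z)=M(c)=v$; and let $k:\{\bullet\}\to S$ send the point to the closed point $c$ of the Sierpinski space $S=\{o,c\}$ (open sets $\emptyset,\{o\},S$). Then, in $\mathrm{Top}$, $\{M\}^{ll}=\{k\}^l$, and this is the class of continuous maps with dense image.
   Context: For continuous maps $f:A\to B$, $g:C\to D'$, $f\pitchfork g$ means: for all continuous $t:A\to C$, $b:B\to D'$ with $g\circ t=b\circ f$ there is continuous $d:B\to C$ with $d\circ f=t$, $g\circ d=b$. For a class $P$, $P^l=\{f: f\pitchfork g\ \forall g\in P\}$, $P^{ll}=(P^l)^l$. *)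

(* Defs.v *)
From HB Require Import structures.
From mathcomp Require Import all_boot all_order.
From mathcomp Require Import all_classical topology.
Set Implicit Arguments. Unset Strict Implicit. Unset Printing Implicit Defensive.
Local Open Scope classical_set_scope.

Definition lifts {A B C D : topologicalType} (f : A -> B) (g : C -> D) : Prop :=
  forall (t : A -> C) (b : B -> D), continuous t -> continuous b ->
    g \o t = b \o f ->
    exists d : B -> C, [/\ continuous d, d \o f = t & g \o d = b].

Definition mor_class := forall A B : topologicalType, (A -> B) -> Prop.

Definition lorth (P : mor_class) : mor_class :=
  fun A B f => continuous f /\ forall (C D : topologicalType) (g : C -> D), P C D g -> lifts f g.

Definition single {C D : topologicalType} (g : C -> D) : mor_class :=
  fun A B f => exists (eA : A = C) (eB : B = D),
    (fun x : C => eq_rect B (fun T : topologicalType => T) (f (eq_rect_r (fun T : topologicalType => T) x eA)) D eB) = g.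

Definition op3 (T : Type) (U : set T) : set_system T :=
  [set A | A = set0 \/ A = U \/ A = setT].

Lemma op3T T (U : set T) : op3 U setT.
Proof. by right; right. Qed.

Lemma op3I T (U : set T) : setI_closed (op3 U).
Proof.
move=> A B [->|[->|->]] [->|[->|->]]; rewrite /op3 /=;
  rewrite ?set0I ?setI0 ?setIid ?setIT ?setTI; tauto.
Qed.

Lemma op3U T (U : set T) (I : Type) (f : I -> set T) :
  (forall i, op3 U (f i)) -> op3 U (\bigcup_i f i).
Proof.
move=> hf.
have [[i fiT]|nT] := pselect (exists i, f i = setT).
  right; right; apply/seteqP; split=> // x _; exists i => //; by rewrite fiT.
have [[i fiU]|nU] := pselect (exists i, f i = U).
  right; left; apply/seteqP; split.
    move=> x [j _ fjx]; have [h|[h|h]] := hf j.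
    - by move: fjx; rewrite h.
    - by move: fjx; rewrite h.
    - by exfalso; apply: nT; exists j.
  by move=> x Ux; exists i => //; rewrite fiU.
left; apply/seteqP; split=> // x [j _ fjx]; have [h|[h|h]] := hf j.
- by move: fjx; rewrite h.
- by exfalso; apply: nU; exists j.
- by exfalso; apply: nT; exists j.
Qed.

Inductive Dpt := Dx | Dy | Dz | Dc.
Definition Dpt_to (p : Dpt) : 'I_4 :=
  match p with Dx => inord 0 | Dy => inord 1 | Dz => inord 2 | Dc => inord 3 end.
Definition Dpt_of (i : 'I_4) : Dpt :=
  match val i with 0 => Dx | 1 => Dy | 2 => Dz | _ => Dc end.
Lemma Dpt_K : cancel Dpt_to Dpt_of. Proof. by case; rewrite /Dpt_of /= inordK. Qed.
HB.instance Definition _ := Choice.copy Dpt (can_type Dpt_K).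
HB.instance Definition _ :=
  @isOpenTopological.Build Dpt (op3 [set p | p != Dc]) (op3T _) (@op3I _ _) (@op3U _ _).

Inductive Ept := Eu | Ev.
Definition Ept_to (p : Ept) : bool := if p is Eu then true else false.
Definition Ept_of (b : bool) : Ept := if b then Eu else Ev.
Lemma Ept_K : cancel Ept_to Ept_of. Proof. by case. Qed.
HB.instance Definition _ := Choice.copy Ept (can_type Ept_K).
HB.instance Definition _ :=
  @isOpenTopological.Build Ept (op3 (@set0 Ept)) (op3T _) (@op3I _ _) (@op3U _ _).

Inductive Spt := So | Sc.
Definition Spt_to (p : Spt) : bool := if p is So then true else false.
Definition Spt_of (b : bool) : Spt := if b then So else Sc.
Lemma Spt_K : cancel Spt_to Spt_of. Proof. by case. Qed.
HB.instance Definition _ := Choice.copy Spt (can_type Spt_K).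
HB.instance Definition _ :=
  @isOpenTopological.Build Spt (op3 [set So]) (op3T _) (@op3I _ _) (@op3U _ _).

Inductive Pt := bullet.
Definition Pt_to (p : Pt) : unit := tt.
Definition Pt_of (u : unit) : Pt := bullet.
Lemma Pt_K : cancel Pt_to Pt_of. Proof. by case. Qed.
HB.instance Definition _ := Choice.copy Pt (can_type Pt_K).
HB.instance Definition _ :=
  @isOpenTopological.Build Pt (op3 (@set0 Pt)) (op3T _) (@op3I _ _) (@op3U _ _).

Definition M (p : Dpt) : Ept :=
  match p with Dx | Dy => Eu | Dz | Dc => Ev end.
Definition k (_ : Pt) : Spt := Sc.

(* Main.v *)
Require Import Defs.
From HB Require Import structures.
From mathcomp Require Import all_boot all_order.
From mathcomp Require Import all_classical topology.
Local Open Scope classical_set_scope.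
Set Implicit Arguments.

Lemma lifts_M_inj (C D' : topologicalType) (g : C -> D') : lifts g M -> injective g.
Proof.
move=> hl a1 a2 e.
pose t := fun a : C => if pselect (a = a1) then Dx else Dy.
have ct : continuous t.
  apply/continuousP => A [->|[->|->]].
  - by rewrite preimage_set0; exact: open0.
  - have -> : t @^-1` [set p | p != Dc] = setT.
      by apply/seteqP; split => // a _; rewrite /t /=; case: pselect => _ /=; apply/eqP.
    exact: openT.
  - by rewrite preimage_setT; exact: openT.
have sq : M \o t = (fun=> Eu) \o g.
  by apply: funext => a; rewrite /t /=; case: pselect.
have [d [_ dg _]] := hl t (fun=> Eu) ct (@cst_continuous _ _ Eu) sq.
have := congr1 (fun h => h a2) dg; have := congr1 (fun h => h a1) dg.
rewrite /= e => ->; rewrite /t; case: (pselect (a2 = a1)) => [h|nh] /=; first by rewrite h. case: pselect => // ? /= [].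
Qed.

Lemma lifts_M_closed (C D' : topologicalType) (g : C -> D') : lifts g M ->
  forall F, closed F -> closed (g @` F).
Proof.
move=> hl F cF; have gi := lifts_M_inj hl.
pose t := fun a : C => if pselect (F a) then Dc else Dx.
pose b := fun q : D' => if pselect (exists a, F a /\ g a = q) then Ev else Eu.
have ct : continuous t.
  apply/continuousP => A [->|[->|->]].
  - by rewrite preimage_set0; exact: open0.
  - have -> : t @^-1` [set p | p != Dc] = ~` F.
      apply/seteqP; split => a; rewrite /t /=; case: pselect => Fa /=; first [by rewrite eqxx | by move=> _ | by move/(_ Fa) | by move=> _; apply/eqP].
    by move: cF; rewrite -openC.
  - by rewrite preimage_setT; exact: openT.
have cb : continuous b.
  apply/continuousP => A [->|[->|->]].
  - by rewrite preimage_set0; exact: open0.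
  - by rewrite preimage_set0; exact: open0.
  - by rewrite preimage_setT; exact: openT.
have sq : M \o t = b \o g.
  apply: funext => a; rewrite /t /b /=; case: pselect => Fa; case: pselect => // H /=.
  - by case: H; exists a.
  - by case: H => a' [Fa' /gi e]; subst a'.
have [d [cd dg Md]] := hl t b ct cb sq.
have -> : g @` F = d @^-1` [set Dc].
  apply/seteqP; split.
    move=> q [a Fa <-] /=; have := congr1 (fun h => h a) dg => /= ->.
    by rewrite /t; case: pselect.
  move=> q /= dq; have := congr1 (fun h => h q) Md; rewrite /= dq /b.
  by case: pselect => // -[a [Fa E]] _; exists a.
move/continuous_closedP: cd; apply.
rewrite -[X in closed X]setCK closedC; have -> : ~` [set Dc] = [set p : Dpt | p != Dc].
  by apply/seteqP; split => p /=; case: p => //=; first [by rewrite eqxx | by move=> h; apply/eqP].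
exact: (or_intror (or_introl erefl)).
Qed.

Lemma k_lifts_M : lifts k M.
Proof.
move=> t b ct cb sq.
pose d := fun s : Spt => if s is Sc then t bullet else (if b So is Eu then Dx else Dz).
exists d; split.
- apply/continuousP => A [->|[->|->]].
  + by rewrite preimage_set0; exact: open0.
  + have [h|h] := pselect (t bullet = Dc).
      have -> : d @^-1` [set p | p != Dc] = [set So].
        apply/seteqP; split => s /=; case: s => //=; rewrite ?h ?eqxx //.
        by case: (b So) => _ /=; apply/eqP.
      exact: (or_intror (or_introl erefl)).
    have -> : d @^-1` [set p | p != Dc] = setT.
      apply/seteqP; split => // s _ /=; case: s => /=; last by apply/eqP.
      by case: (b So); apply/eqP.
    exact: openT.
  + by rewrite preimage_setT; exact: openT.
- by apply: funext => -[].
- apply: funext => -[] /=.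
  + by rewrite /d; case: (b So).
  + by have := congr1 (fun h => h bullet) sq.
Qed.

Lemma single_M : @single _ _ M Dpt Ept M.
Proof. by exists erefl, erefl. Qed.

Lemma k_in : @lorth (single M) Pt Spt k.
Proof.
split; first exact: (@cst_continuous _ _ Sc).
move=> C D g [eA [eB e]]; subst.
have -> : g = M by exact: e.
exact: k_lifts_M.
Qed.

Lemma k_char (A B : topologicalType) (f : A -> B) :
  lorth (single k) f <-> continuous f /\ dense (range f).
Proof.
split.
- move=> [cf H]; split => // O [q Oq] oO.
  have [[a Ofa]|no] := pselect (exists a, O (f a)).
    by exists (f a); split => //; exists a.
  pose b := fun q => if pselect (O q) then So else Sc.
  have cb : continuous b.
    apply/continuousP => S [->|[->|->]].
    + by rewrite preimage_set0; exact: open0.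
    + have -> : b @^-1` [set So] = O.
        by apply/seteqP; split => x /=; rewrite /b; case: pselect.
      exact: oO.
    + by rewrite preimage_setT; exact: openT.
  have sq : k \o (fun=> bullet) = b \o f.
    apply: funext => a /=; rewrite /b; case: pselect => // Oa.
    by case: no; exists a.
  have [d [_ _ kd]] := H _ _ k (ex_intro _ erefl (ex_intro _ erefl erefl))
     (fun=> bullet) b (@cst_continuous _ _ bullet) cb sq.
  have := congr1 (fun h => h q) kd; rewrite /= /b /k; case: pselect => //.
- move=> [cf dn]; split => // C D g [eA [eB e]]; subst.
  have -> : g = k by exact: e.
  move=> t b ct cb sq; exists (fun=> bullet); split.
  + exact: (@cst_continuous _ _ bullet).
  + by apply: funext => a /=; case: (t a).
  + apply: funext => q /=; rewrite /k.
    case E: (b q) => //.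
    have oO : open (b @^-1` [set So]).
      by move/continuousP: cb; apply; exact: (or_intror (or_introl erefl)).
    have [x [/= bx [a _ fax]]] := dn _ (ex_intro _ q E) oO.
    have := congr1 (fun h => h a) sq; rewrite /= fax bx /k.
    by [].
Qed.

Lemma dense_lifts (A B : topologicalType) (f : A -> B) (C D : topologicalType) (g : C -> D) :
  continuous f -> dense (range f) -> lifts g M -> lifts f g.
Proof.
move=> cf dn hM; have gi := lifts_M_inj hM; have gc := lifts_M_closed hM.
move=> t b ct cb sq.
have surj : forall q, exists c, g c = b q.
  move=> q; apply: contrapT => nq.
  have oO : open (~` (b @^-1` (g @` setT))).
    rewrite openC; move/continuous_closedP: cb; apply; apply: gc; exact: closedT.
  have ne : (~` (b @^-1` (g @` setT))) !=set0.
    by exists q => -[c _ e]; apply: nq; exists c.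
  have [x [nx [a _ fax]]] := dn _ ne oO.
  apply: nx; rewrite /= -fax; exists (t a) => //.
  by have := congr1 (fun h => h a) sq.
pose d q := proj1_sig (cid (surj q)).
have dP : forall q, g (d q) = b q := fun q => proj2_sig (cid (surj q)).
exists d; split.
- apply/continuous_closedP => F cF.
  have -> : d @^-1` F = b @^-1` (g @` F).
    apply/seteqP; split => q /=.
      by move=> Fdq; exists (d q) => //; exact: dP.
    by move=> [c Fc e]; rewrite -dP in e; rewrite -(gi _ _ e).
  by move/continuous_closedP: cb; apply; apply: gc.
- apply: funext => a /=; apply: gi; rewrite dP.
  by have := congr1 (fun h => h a) sq.
- by apply: funext => q /=; exact: dP.
Qed.

Unset Implicit Arguments.
Theorem mainTheorem8 :
  forall (A B : topologicalType) (f : A -> B),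
    (lorth (lorth (single M)) f <-> lorth (single k) f) /\
    (lorth (single k) f <-> continuous f /\ dense (range f)).
Proof.
move=> A B f; split; last exact: k_char.
split.
- move=> [cf H]; split => // C D g [eA [eB e]]; subst.
  have -> : g = k by exact: e.
  exact: H k_in.
- move=> /k_char [cf dn]; split => // C D g [cg hg].
  apply: dense_lifts => //.
  exact: hg _ _ M single_M.
Qed.
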